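(* For all formulas $\varphi,\psi$: $\varphi,\varphi^{*}\vdash_{\mathsf{NeL}+\{\mathrm{(DI)}^s\}}\psi$.
   Context: Formulas are built from a countably infinite set of variables using binary $\otimes,\circ$ and unary ${}^{*}$. Abbreviations: $\varphi\Rightarrow\psi:=(\varphi\circ\psi^{*})^{*}$; $\varphi\Leftrightarrow\psi:=(\varphi\Rightarrow\psi)\otimes(\psi\Rightarrow\varphi)$; $\varphi\not\Leftrightarrow\psi:=(\varphi\Leftrightarrow\psi)^{*}$; $\varphi\not\Leftrightarrow\psi\not\Leftrightarrow\chi:=((\varphi\not\Leftrightarrow\psi)\otimes(\varphi\not\Leftrightarrow\chi))\otimes(\psi\not\Leftrightarrow\chi)$; $\varphi\oplus\psi:=(\varphi^{*}\otimes\psi^{*})^{*}$. $\mathsf{NeL}$: axiom schemes (A1) $\varphi\Rightarrow\varphi$; (A2) $(\varphi\circ\psi)\Rightarrow(\psi\circ\varphi)$; (A3) $\varphi\Rightarrow\varphi^{**}$; (A4) $(\varphi\Rightarrow\psi)\Rightarrow(\varphi\circ\psi)$; (A5) $(\varphi\otimes\psi)\Leftrightarrow(\psi\otimes\varphi)$; (A6) $((\varphi\otimes\psi)\Rightarrow\chi)\Rightarrow((\varphi\otimes\chi^{*})\Rightarrow\psi^{*})$; (A7) $(\varphi\not\Leftrightarrow\psi\not\Leftrightarrow\chi)\Rightarrow((\varphi\Rightarrow\psi)\Rightarrow((\psi\Rightarrow\chi)\Rightarrow(\varphi\Rightarrow\chi)))$; rules on arbitrary formulas: $\varphi\Rightarrow\psi,\varphi/\psi$;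 $\varphi,\psi/\varphi\otimes\psi$; $\varphi\Leftrightarrow\psi,\chi/\chi'$ ($\chi'$ from $\chi$ replacing one or more occurrences of $\varphi$ by $\psi$); $\varphi\otimes\psi/\varphi$. $\Gamma\vdash\varphi$ means derivability from $\Gamma$ and axiom instances. $\mathsf{NeL}+\{\mathrm{(DI)}^s\}$ adds the rule $\varphi/\varphi\oplus\psi$. *)

(* Defs.v *)
From Stdlib Require Import List.

Inductive form : Type :=
| Var : nat -> form
| Ten : form -> form -> form
| Cir : form -> form -> form
| Neg : form -> form.

Definition Imp (a b : form) : form := Neg (Cir a (Neg b)).
Definition Iff (a b : form) : form := Ten (Imp a b) (Imp b a).
Definition NIff (a b : form) : form := Neg (Iff a b).
Definition NIff3 (a b c : form) : form :=
  Ten (Ten (NIff a b) (NIff a c)) (NIff b c).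
Definition Oplus (a b : form) : form := Neg (Ten (Neg a) (Neg b)).

Inductive axiom : form -> Prop :=
| A1 a : axiom (Imp a a)
| A2 a b : axiom (Imp (Cir a b) (Cir b a))
| A3 a : axiom (Imp a (Neg (Neg a)))
| A4 a b : axiom (Imp (Imp a b) (Cir a b))
| A5 a b : axiom (Iff (Ten a b) (Ten b a))
| A6 a b c : axiom (Imp (Imp (Ten a b) c) (Imp (Ten a (Neg c)) (Neg b)))
| A7 a b c : axiom (Imp (NIff3 a b c)
                        (Imp (Imp a b) (Imp (Imp b c) (Imp a c)))).

(* repl0 a b x y : y arises from x by replacing zero or more occurrences
   of a by b;  repl a b x y : at least one occurrence is replaced. *)
Inductive repl0 (a b : form) : form -> form -> Prop :=
| R0_refl x : repl0 a b x x
| R0_here : repl0 a b a b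
| R0_Ten x1 x2 y1 y2 : repl0 a b x1 y1 -> repl0 a b x2 y2 ->
    repl0 a b (Ten x1 x2) (Ten y1 y2)
| R0_Cir x1 x2 y1 y2 : repl0 a b x1 y1 -> repl0 a b x2 y2 ->
    repl0 a b (Cir x1 x2) (Cir y1 y2)
| R0_Neg x y : repl0 a b x y -> repl0 a b (Neg x) (Neg y).

Inductive repl (a b : form) : form -> form -> Prop :=
| R_here : repl a b a b
| R_TenL x1 x2 y1 y2 : repl a b x1 y1 -> repl0 a b x2 y2 ->
    repl a b (Ten x1 x2) (Ten y1 y2)
| R_TenR x1 x2 y1 y2 : repl0 a b x1 y1 -> repl a b x2 y2 ->
    repl a b (Ten x1 x2) (Ten y1 y2)
| R_CirL x1 x2 y1 y2 : repl a b x1 y1 -> repl0 a b x2 y2 ->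
    repl a b (Cir x1 x2) (Cir y1 y2)
| R_CirR x1 x2 y1 y2 : repl0 a b x1 y1 -> repl a b x2 y2 ->
    repl a b (Cir x1 x2) (Cir y1 y2)
| R_Neg x y : repl a b x y -> repl a b (Neg x) (Neg y).

Inductive der_DI (Gamma : form -> Prop) : form -> Prop :=
| d_hyp a : Gamma a -> der_DI Gamma a
| d_ax a : axiom a -> der_DI Gamma a
| d_mp a b : der_DI Gamma (Imp a b) -> der_DI Gamma a -> der_DI Gamma b
| d_adj a b : der_DI Gamma a -> der_DI Gamma b -> der_DI Gamma (Ten a b)
| d_rep a b c c' : der_DI Gamma (Iff a b) -> der_DI Gamma c -> repl a b c c' ->
    der_DI Gamma c'
| d_simp a b : der_DI Gamma (Ten a b) -> der_DI Gamma a
| d_DI a b : der_DI Gamma a -> der_DI Gamma (Oplus a b).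

(* Main.v *)
Require Import Defs.

Section S.
Variable phi : form.
Let G := fun x => x = phi \/ x = Neg phi.

Lemma hp : der_DI G phi. Proof. apply d_hyp. unfold G; auto. Qed.
Lemma hn : der_DI G (Neg phi). Proof. apply d_hyp. unfold G; auto. Qed.

Lemma dneg (t : form) : der_DI G (Neg (Neg t)).
Proof.
  apply (d_mp _ (Ten (Neg phi) (Neg (Ten (Neg phi) (Neg t))))).
  - apply (d_mp _ (Imp (Ten (Neg phi) (Neg t)) (Ten (Neg phi) (Neg t)))).
    + apply d_ax. apply A6.
    + apply d_ax. apply A1.
  - apply d_adj. apply hn. apply (d_DI _ phi t). apply hp.
Qed.

Lemma anyneg (q : form) : der_DI G (Neg q).
Proof.
  apply (d_mp _ (Ten phi (Neg (Neg (Neg (Ten phi q)))))).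
  - apply (d_mp _ (Imp (Ten phi q) (Neg (Neg (Ten phi q))))).
    + apply d_ax. apply A6.
    + apply d_ax. apply A3.
  - apply d_adj. apply hp. apply dneg.
Qed.
End S.

Theorem proposition5p13 (phi psi : form) :
  der_DI (fun x => x = phi \/ x = Neg phi) psi.
Proof.
  apply (d_mp _ (Neg (Neg psi))).
  - apply anyneg.
  - apply dneg.
Qed.
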